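(* (Soundness and Completeness) A sequent of formulas of Basic Hybrid Logic $\mathscr{H}(@)$ is valid in all hybrid models iff it is provable in the calculus $\mathbf{G}'$.
   Context: Fix pairwise disjoint sets $\mathsf{Prop}$ (countably infinite), $\mathsf{Nom}$ (nominals, countably infinite) and $\mathsf{Mod}$ (finite). Formulas of $\mathscr{H}(@)$: $\varphi,\psi ::= p\mid i\mid\bot\mid\varphi\to\psi\mid @_i\varphi\mid\langle\mathsf a\rangle\varphi$ with $p\in\mathsf{Prop}$, $i\in\mathsf{Nom}$, $\mathsf a\in\mathsf{Mod}$ (other connectives are the usual abbreviations, e.g. $\neg\varphi:=\varphi\to\bot$). A hybrid model is $\mathcal M=\langle N,\{R_{\mathsf a}\}_{\mathsf a\in\mathsf{Mod}},g,V\rangle$ with $N\ne\emptyset$, $R_{\mathsf a}\subseteq N\times N$, $g:\mathsf{Nom}\to N$, $V:\mathsf{Prop}\to 2^N$; satisfaction: $\mathcal M,n\Vdash p$ iff $n\in V(p)$; $\mathcal M,n\Vdash i$ iff $g(i)=n$; $\bot$ never; $\to$ classical; $\mathcal M,n\Vdash @_i\varphi$ iff $\mathcal M,g(i)\Vdash\varphi$; $\mathcal M,n\Vdash\langle\mathsf a\rangle\varphi$ iff some $n'$ with $nR_{\mathsf a}n'$ has $\mathcal M,n'\Vdash\varphi$. A sequent $\Gamma\vdash\Delta$ here consists of finite (possibly empty) sets $\Gamma,\Delta$ of formulas of the form $@_i\varphi$ with $\varphi$ an $\mathscr H(@)$ formula; it is valid in all hybrid models iff for every hybrid model $\mathcal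 M$ and node $n$, if $\mathcal M,n\Vdash\gamma$ for all $\gamma\in\Gamma$ then $\mathcal M,n\Vdash\delta$ for some $\delta\in\Delta$. ''$\varphi,\Gamma$'' means $\{\varphi\}\cup\Gamma$. The calculus $\mathbf G'$ has the following rules (premisses $\Rightarrow$ conclusion), all restricted to such sequents: (Ax) axiom $\varphi,\Gamma\vdash\Delta,\varphi$ with $\varphi$ of the form $@_ip$ or $@_ij$; ($\bot$) axiom $@_i\bot,\Gamma\vdash\Delta$; ($\to$L) $\Gamma\vdash\Delta,@_i\varphi$ and $@_i\psi,\Gamma\vdash\Delta\Rightarrow @_i(\varphi\to\psi),\Gamma\vdash\Delta$; ($\to$R) $@_i\varphi,\Gamma\vdash\Delta,@_i\psi\Rightarrow\Gamma\vdash\Delta,@_i(\varphi\to\psi)$; ($@$T) $@_ii,\Gamma\vdash\Delta\Rightarrow\Gamma\vdash\Delta$; ($@5$) $@_jk,@_ij,@_ik,\Gamma\vdash\Delta\Rightarrow @_ij,@_ik,\Gamma\vdash\Delta$; (Nom) $@_ij,\Gamma\vdash\Delta\Rightarrow\Gamma\vdash\Delta$, $j$ not in the conclusion; (S$_1$) $@_j\varphi,@_ij,@_i\varphi,\Gamma\vdash\Delta\Rightarrow @_ij,@_i\varphi,\Gamma\vdash\Delta$, $\varphi$ of the form $p$, $\bot$ or $\langle\mathsf a\rangle k$; (S$_2$) $@_i\langle\mathsf a\rangle k,@_jk,@_i\langle\mathsf a\rangle j,\Gamma\vdash\Delta\Rightarrow @_jk,@_i\langle\mathsf a\rangle j,\Gamma\vdash\Delta$;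 ($@$L) $@_i\varphi,\Gamma\vdash\Delta\Rightarrow @_j@_i\varphi,\Gamma\vdash\Delta$; ($@$R) $\Gamma\vdash\Delta,@_i\varphi\Rightarrow\Gamma\vdash\Delta,@_j@_i\varphi$; ($\langle\mathsf a\rangle$L) $@_i\langle\mathsf a\rangle j,@_j\varphi,\Gamma\vdash\Delta\Rightarrow @_i\langle\mathsf a\rangle\varphi,\Gamma\vdash\Delta$, $j$ not in the conclusion; ($\langle\mathsf a\rangle$R) $@_i\langle\mathsf a\rangle j,\Gamma\vdash\Delta,@_i\langle\mathsf a\rangle\varphi,@_j\varphi\Rightarrow @_i\langle\mathsf a\rangle j,\Gamma\vdash\Delta,@_i\langle\mathsf a\rangle\varphi$; (Cut) $\Gamma\vdash\Delta,\varphi$ and $\varphi,\Gamma'\vdash\Delta'\Rightarrow\Gamma,\Gamma'\vdash\Delta,\Delta'$; (WL) $\Gamma\vdash\Delta\Rightarrow\varphi,\Gamma\vdash\Delta$; (WR) $\Gamma\vdash\Delta\Rightarrow\Gamma\vdash\Delta,\varphi$. A sequent is provable in $\mathbf G'$ if it is the root of a finite derivation tree built from these rules all of whose leaves are instances of (Ax) or ($\bot$). *)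

(* Defs.v *)
From mathcomp Require Import ssreflect ssrbool fintype.
From Stdlib Require Import List.

Set Implicit Arguments.

(* Prop and Nom are both countably infinite: we take nat for each
   (the constructors keep them disjoint from each other and from Mod). *)
Definition prop_sym := nat.
Definition nom := nat.

Section Syntax.
Variable Mod : Type.

Inductive form : Type :=
| FProp : prop_sym -> form
| FNom  : nom -> form
| FBot  : form
| FImp  : form -> form -> form
| FAt   : nom -> form -> form
| FDia  : Mod -> form -> form.

(* A sequent formula is of the form @_i phi; we represent it as the pair
   (i, phi).  So (j, FAt i phi) is @_j @_i phi. *)
Definition lform := (nom * form)%type.

Fixpoint nom_occurs (j : nom) (phi : form) : Prop :=
  match phi with
  | FProp _ => False
  | FNom k => k = j
  | FBot => False
  | FImp a b => nom_occurs j a \/ nom_occurs j b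
  | FAt i a => i = j \/ nom_occurs j a
  | FDia _ a => nom_occurs j a
  end.

Definition nom_occurs_l (j : nom) (f : lform) : Prop :=
  fst f = j \/ nom_occurs j (snd f).

Definition nom_in_seq (j : nom) (G D : list lform) : Prop :=
  exists f, (In f G \/ In f D) /\ nom_occurs_l j f.

Definition same_set (A B : list lform) : Prop := forall f, In f A <-> In f B.

End Syntax.

Arguments FBot {Mod}.
Arguments FProp {Mod}.
Arguments FNom {Mod}.

Record model (Mod : Type) : Type := Model {
  node : Type;
  rel  : Mod -> node -> node -> Prop;
  gnom : nom -> node;
  val  : prop_sym -> node -> Prop
}.

Fixpoint sat (Mod : Type) (M : model Mod) (n : node M) (phi : form Mod) : Prop :=
  match phi with
  | FProp p => val M p n
  | FNom i => gnom M i = n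
  | FBot => False
  | FImp a b => sat M n a -> sat M n b
  | FAt i a => sat M (gnom M i) a
  | FDia a b => exists n', rel M a n n' /\ sat M n' b
  end.

Definition sat_l (Mod : Type) (M : model Mod) (n : node M) (f : lform Mod) : Prop :=
  sat M n (FAt (fst f) (snd f)).

(* validity of a sequent in all hybrid models (nonemptiness of the node set
   is automatic, since the node n is given). *)
Definition valid (Mod : Type) (G D : list (lform Mod)) : Prop :=
  forall (M : model Mod) (n : node M),
    (forall g, In g G -> sat_l M n g) -> exists d, In d D /\ sat_l M n d.

(* Sequents are finite SETS; we represent them by lists,
   "phi, Gamma" being phi :: Gamma, and close provability under replacing
   a list by one with the same elements (rule [P_set]), so that provability
   depends only on the underlying sets. *)
Inductive G'prov (Mod : Type) : list (lform Mod) -> list (lform Mod) -> Prop :=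
| P_set : forall G D G' D', same_set G G' -> same_set D D' ->
    G'prov G D -> G'prov G' D'
| P_ax_prop : forall i p G D,
    G'prov ((i, FProp p) :: G) ((i, FProp p) :: D)
| P_ax_nom : forall i j G D,
    G'prov ((i, FNom j) :: G) ((i, FNom j) :: D)
| P_bot : forall i G D, G'prov ((i, FBot) :: G) D
| P_impL : forall i phi psi G D,
    G'prov G ((i, phi) :: D) -> G'prov ((i, psi) :: G) D ->
    G'prov ((i, FImp phi psi) :: G) D
| P_impR : forall i phi psi G D,
    G'prov ((i, phi) :: G) ((i, psi) :: D) ->
    G'prov G ((i, FImp phi psi) :: D)
| P_atT : forall i G D,
    G'prov ((i, FNom i) :: G) D -> G'prov G D
| P_at5 : forall i j k G D,
    G'prov ((j, FNom k) :: (i, FNom j) :: (i, FNom k) :: G) D ->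
    G'prov ((i, FNom j) :: (i, FNom k) :: G) D
| P_nom : forall i j G D,
    ~ nom_in_seq j G D ->
    G'prov ((i, FNom j) :: G) D -> G'prov G D
| P_S1 : forall i j phi G D,
    ((exists p, phi = FProp p) \/ phi = FBot \/
     (exists a k, phi = FDia a (FNom k))) ->
    G'prov ((j, phi) :: (i, FNom j) :: (i, phi) :: G) D ->
    G'prov ((i, FNom j) :: (i, phi) :: G) D
| P_S2 : forall i j k a G D,
    G'prov ((i, FDia a (FNom k)) :: (j, FNom k) :: (i, FDia a (FNom j)) :: G) D ->
    G'prov ((j, FNom k) :: (i, FDia a (FNom j)) :: G) D
| P_atL : forall i j phi G D,
    G'prov ((i, phi) :: G) D -> G'prov ((j, FAt i phi) :: G) D
| P_atR : forall i j phi G D,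
    G'prov G ((i, phi) :: D) -> G'prov G ((j, FAt i phi) :: D)
| P_diaL : forall i j a phi G D,
    ~ nom_in_seq j ((i, FDia a phi) :: G) D ->
    G'prov ((i, FDia a (FNom j)) :: (j, phi) :: G) D ->
    G'prov ((i, FDia a phi) :: G) D
| P_diaR : forall i j a phi G D,
    G'prov ((i, FDia a (FNom j)) :: G) ((i, FDia a phi) :: (j, phi) :: D) ->
    G'prov ((i, FDia a (FNom j)) :: G) ((i, FDia a phi) :: D)
| P_cut : forall f G D G' D',
    G'prov G (f :: D) -> G'prov (f :: G') D' -> G'prov (G ++ G') (D ++ D')
| P_WL : forall f G D, G'prov G D -> G'prov (f :: G) D
| P_WR : forall f G D, G'prov G D -> G'prov G (f :: D).

(* Main.v *)
Require Import Defs.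
From mathcomp Require Import ssreflect ssrbool eqtype choice fintype.
From Stdlib Require Import List Arith Lia Classical ClassicalEpsilon FunctionalExtensionality PropExtensionality.
Definition classic_dec (P : Prop) : {P} + {~ P} := excluded_middle_informative P.

Section Sound.
Variable Mod : Type.

Definition upd (M : model Mod) (j : nom) (x : node M) : model Mod :=
  @Model Mod (node M) (Defs.rel M) (fun k => if Nat.eqb k j then x else gnom M k) (Defs.val M).

Lemma upd_fresh (M : model Mod) j x (phi : form Mod) :
  ~ nom_occurs j phi -> forall n : node M, sat (upd M j x) n phi <-> sat M n phi.
Proof.
  induction phi as [p|k| |a IHa b IHb|k a IHa|m a IHa]; simpl; intros Hn n.
  - tauto.
  - destruct (Nat.eqb_spec k j); [tauto|tauto].
  - tauto.
  - rewrite (IHa (fun h => Hn (or_introl h)) n) (IHb (fun h => Hn (or_intror h)) n). tauto.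
  - destruct (Nat.eqb_spec k j); [tauto|].
    apply IHa. tauto.
  - split; intros [n' [H1 H2]]; exists n'; split; auto; apply (IHa Hn n'); auto.
Qed.

Lemma upd_fresh_l (M : model Mod) j x (f : lform Mod) (n : node M) :
  ~ nom_occurs_l j f -> sat_l (upd M j x) n f <-> sat_l M n f.
Proof.
  destruct f as [i phi]; unfold sat_l, nom_occurs_l; simpl; intros H.
  destruct (Nat.eqb_spec i j); [tauto|]. apply upd_fresh. tauto.
Qed.

Lemma soundness (G D : list (lform Mod)) : G'prov G D -> valid G D.
Proof.
  induction 1; unfold valid in *; intros M n HG; unfold sat_l in *; simpl in *.
  - destruct (IHG'prov M n) as [d [Hd1 Hd2]].
    + intros g Hg. apply HG, H. auto.
    + exists d; split; auto. apply H0; auto.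
  - exists (i, FProp p). simpl; split; auto. apply (HG (i, FProp p)); auto.
  - exists (i, FNom j). simpl; split; auto. apply (HG (i, FNom j)); auto.
  - destruct (HG (i, FBot)); auto.
  - destruct (IHG'prov1 M n) as [d [Hd1 Hd2]].
    + intros g Hg; apply HG; auto.
    + destruct Hd1 as [<-|Hd1].
      * destruct (IHG'prov2 M n) as [d [Hd1' Hd2']].
        -- intros g [<-|Hg]; simpl. apply (HG (i, FImp phi psi)); auto. apply HG; auto.
        -- exists d; auto.
      * exists d; auto.
  - destruct (classic_dec (sat M (gnom M i) phi)) as [Hp|Hp].
    + destruct (IHG'prov M n) as [d [[<-|Hd1] Hd2]].
      * intros g [<-|Hg]; auto.
      * exists (i, FImp phi psi); simpl; auto.
      * exists d; auto.
    + exists (i, FImp phi psi); simpl; split; auto. tauto.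
  - apply (IHG'prov M n). intros g [<-|Hg]; simpl; auto.
  - apply (IHG'prov M n). intros g [<-|Hg]; [simpl | apply HG; tauto].
    pose proof (HG (i, FNom j) (or_introl Logic.eq_refl)) as H1.
    pose proof (HG (i, FNom k) (or_intror (or_introl Logic.eq_refl))) as H2.
    simpl in *. congruence.
  - set (M' := upd M j (gnom M i)).
    destruct (IHG'prov M' n) as [d [Hd1 Hd2]].
    + intros g [<-|Hg].
      * simpl. unfold M', upd; simpl. rewrite Nat.eqb_refl.
        destruct (Nat.eqb_spec i j); auto.
      * apply (upd_fresh_l M j (gnom M i) g n). intros Hc; apply H; exists g; auto.
        apply HG; auto.
    + exists d; split; auto.
      apply (upd_fresh_l M j (gnom M i) d n). intros Hc; apply H; exists d; auto.
      exact Hd2.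
  - apply (IHG'prov M n). intros g [<-|Hg]; [simpl | apply HG; tauto].
    pose proof (HG (i, FNom j) (or_introl Logic.eq_refl)) as H1.
    pose proof (HG (i, phi) (or_intror (or_introl Logic.eq_refl))) as H2.
    simpl in *. rewrite H1. auto.
  - apply (IHG'prov M n). intros g [<-|Hg]; [simpl | apply HG; tauto].
    pose proof (HG (j, FNom k) (or_introl Logic.eq_refl)) as H1.
    pose proof (HG (i, FDia a (FNom j)) (or_intror (or_introl Logic.eq_refl))) as H2.
    simpl in *. destruct H2 as [n' [R1 R2]]. exists n'; split; auto. congruence.
  - apply (IHG'prov M n). intros g [<-|Hg]; simpl; auto.
    apply (HG (j, FAt i phi)); auto.
  - destruct (IHG'prov M n) as [d [[<-|Hd1] Hd2]]; auto.
    + exists (j, FAt i phi); simpl; auto.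
    + exists d; auto.
  - destruct (HG (i, FDia a phi) (or_introl Logic.eq_refl)) as [n' [R1 R2]].
    set (M' := upd M j n').
    assert (Hij : i <> j). { intros ->. apply H. exists (j, FDia a phi). simpl; split; auto. left; auto. }
    destruct (IHG'prov M' n) as [d [Hd1 Hd2]].
    + intros g [<-|[<-|Hg]]; simpl; unfold M', upd; simpl.
      * rewrite Nat.eqb_refl. destruct (Nat.eqb_spec i j); [congruence|].
        exists n'; auto.
      * rewrite Nat.eqb_refl. apply (upd_fresh M j n' phi). intros Hc; apply H.
        exists (i, FDia a phi); simpl; split; auto. right; auto. exact R2.
      * apply (upd_fresh_l M j n' g n). intros Hc; apply H; exists g; simpl; auto.
        apply HG; auto.
    + exists d; split; auto.
      apply (upd_fresh_l M j n' d n). intros Hc; apply H; exists d; auto.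
      exact Hd2.
  - destruct (IHG'prov M n) as [d [[<-|[<-|Hd1]] Hd2]]; auto.
    + exists (i, FDia a phi); simpl; auto.
    + exists (i, FDia a phi); simpl; split; auto.
      pose proof (HG (i, FDia a (FNom j)) (or_introl Logic.eq_refl)) as H1. simpl in *.
      destruct H1 as [n' [R1 R2]]. exists n'; split; auto. congruence.
    + exists d; auto.
  - destruct (IHG'prov1 M n) as [d [[<-|Hd1] Hd2]].
    + intros g Hg; apply HG, in_or_app; auto.
    + destruct (IHG'prov2 M n) as [d' [Hd1' Hd2']].
      * intros g [<-|Hg]; auto. apply HG, in_or_app; auto.
      * exists d'; split; auto. apply in_or_app; auto.
    + exists d; split; auto. apply in_or_app; auto.
  - apply (IHG'prov M n). intros g Hg; apply HG; auto.
  - destruct (IHG'prov M n) as [d [Hd1 Hd2]]; auto. exists d; simpl; auto.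
Qed.
End Sound.

Ltac ss := unfold same_set; let f := fresh "f" in intro f; simpl; rewrite ?in_app_iff; tauto.

Section Basic.
Variable Mod : Type.

Lemma weaken (G D G' D' : list (lform Mod)) :
  G'prov G D -> incl G G' -> incl D D' -> G'prov G' D'.
Proof.
  intros H HG HD.
  assert (H2 : G'prov (G' ++ G) (D' ++ D)).
  { clear HG HD. induction G' as [|x G' IH]; simpl.
    - induction D' as [|y D' IH]; simpl; auto. apply P_WR; auto.
    - apply P_WL; auto. }
  apply (P_set (G:=G'++G) (D:=D'++D)); [| |exact H2];
    intro f; rewrite in_app_iff; split; auto; intros [?|?]; auto.
Qed.

Fixpoint nb (phi : form Mod) : nat :=
  match phi with
  | FNom k => S k
  | FImp a b => max (nb a) (nb b)
  | FAt i a => max (S i) (nb a)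
  | FDia _ a => nb a
  | _ => 0
  end.

Lemma nb_spec j phi : nom_occurs j phi -> j < nb phi.
Proof.
  induction phi as [p|k| |a IHa b IHb|k a IHa|m a IHa]; intros H; cbn [nom_occurs nb] in *.
  - tauto.
  - subst; lia.
  - tauto.
  - destruct H as [H|H]; [pose proof (IHa H)|pose proof (IHb H)]; lia.
  - destruct H as [H|H]; [subst; lia|pose proof (IHa H); lia].
  - auto.
Qed.

Definition nbl (f : lform Mod) := max (S (fst f)) (nb (snd f)).
Fixpoint nbs (l : list (lform Mod)) : nat :=
  match l with nil => 0 | f :: l => max (nbl f) (nbs l) end.

Lemma nbs_spec j l f : In f l -> nom_occurs_l j f -> j < nbs l.
Proof.
  induction l as [|x l IH]; simpl; [tauto|].
  intros [<-|Hin] Ho.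
  - unfold nbl, nom_occurs_l in *. destruct Ho as [<-|Ho]; [lia|].
    pose proof (nb_spec _ _ Ho); lia.
  - pose proof (IH Hin Ho); lia.
Qed.

Definition fresh (G D : list (lform Mod)) := nbs G + nbs D.

Lemma fresh_spec G D : ~ nom_in_seq (fresh G D) G D.
Proof.
  intros [f [[H|H] Ho]]; unfold fresh in *.
  - pose proof (nbs_spec _ _ _ H Ho); lia.
  - pose proof (nbs_spec _ _ _ H Ho); lia.
Qed.

Lemma ident : forall (phi : form Mod) i G D, G'prov ((i,phi)::G) ((i,phi)::D).
Proof.
  induction phi as [p|k| |a IHa b IHb|k a IHa|m a IHa]; intros i G D.
  - apply P_ax_prop.
  - apply P_ax_nom.
  - apply P_bot.
  - apply P_impR.
    apply (P_set (G:=(i, FImp a b)::(i,a)::G) (D:=(i,b)::D)); [ss|ss|].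
    apply P_impL.
    + apply (P_set (G:=(i,a)::G) (D:=(i,a)::(i,b)::D)); [ss|ss|apply IHa].
    + apply IHb.
  - apply P_atL. apply P_atR. apply IHa.
  - set (j := fresh ((i,FDia m a)::G) ((i,FDia m a)::D)).
    apply (P_diaL (j:=j)); [apply fresh_spec|].
    apply P_diaR.
    apply (P_set (G:=(j,a)::(i,FDia m (FNom j))::G) (D:=(j,a)::(i,FDia m a)::D)); [ss|ss|apply IHa].
Qed.

Lemma ident1 (f : lform Mod) : G'prov (f :: nil) (f :: nil).
Proof. destruct f; apply ident. Qed.

Lemma fin_bound (A : Type) (c : nat -> list A) :
  (forall n m, n <= m -> incl (c n) (c m)) ->
  forall L, (forall x, In x L -> exists n, In x (c n)) -> exists N, forall x, In x L -> In x (c N).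
Proof.
  intros Hm L. induction L as [|a L IH]; intros H.
  - exists 0; simpl; tauto.
  - destruct (H a (or_introl Logic.eq_refl)) as [n Hn].
    destruct IH as [N HN]. { intros x Hx; apply H; simpl; auto. }
    exists (max n N). intros x [<-|Hx].
    + apply (Hm n); [lia|auto].
    + apply (Hm N); [lia|auto].
Qed.

End Basic.
Arguments fresh {Mod} G D.
Arguments weaken {Mod G D G' D'}.
Arguments fin_bound {A}.
Arguments fresh_spec {Mod} G D.
Arguments ident1 {Mod}.
Arguments ident {Mod}.

Section Enum.
Variable Mod : finType.

Fixpoint enc (phi : form Mod) : GenTree.tree (nat + Mod) :=
  match phi with
  | FProp p => GenTree.Node 0 (GenTree.Leaf (inl p) :: nil)
  | FNom k => GenTree.Node 1 (GenTree.Leaf (inl k) :: nil)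
  | FBot => GenTree.Node 2 nil
  | FImp a b => GenTree.Node 3 (enc a :: enc b :: nil)
  | FAt i a => GenTree.Node 4 (GenTree.Leaf (inl i) :: enc a :: nil)
  | FDia m a => GenTree.Node 5 (GenTree.Leaf (inr m) :: enc a :: nil)
  end.

Fixpoint dec (t : GenTree.tree (nat + Mod)) : form Mod :=
  match t with
  | GenTree.Node 0 (GenTree.Leaf (inl p) :: _) => FProp p
  | GenTree.Node 1 (GenTree.Leaf (inl k) :: _) => FNom k
  | GenTree.Node 3 (a :: b :: _) => FImp (dec a) (dec b)
  | GenTree.Node 4 (GenTree.Leaf (inl i) :: a :: _) => FAt i (dec a)
  | GenTree.Node 5 (GenTree.Leaf (inr m) :: a :: _) => FDia m (dec a)
  | _ => FBot
  end.

Lemma decK phi : dec (enc phi) = phi.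
Proof. induction phi; simpl; congruence. Qed.

Definition enumf (n : nat) : lform Mod :=
  match @unpickle (nat * GenTree.tree (nat + Mod))%type n with
  | Some (i, t) => (i, dec t)
  | None => (0, FBot)
  end.

Lemma enumf_surj f : exists n, enumf n = f.
Proof.
  destruct f as [i phi].
  exists (pickle ((i, enc phi) : (nat * GenTree.tree (nat + Mod))%type)).
  unfold enumf. rewrite pickleK. rewrite decK. reflexivity.
Qed.
End Enum.
Arguments enumf_surj {Mod}.
Arguments enumf {Mod}.

Section Chain.
Variable Mod : finType.
Variables G0 D0 : list (lform Mod).
Hypothesis Hnp : ~ G'prov G0 D0.

Definition addL (f : lform Mod) (Gn Dn : list (lform Mod)) : list (lform Mod) :=
  match f with
  | (i, FDia a phi) =>
      let j := fresh (f :: Gn) Dn in (i, FDia a (FNom j)) :: (j, phi) :: f :: Gn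
  | _ => f :: Gn
  end.

Lemma addL_in f Gn Dn : In f (addL f Gn Dn) /\ incl Gn (addL f Gn Dn).
Proof.
  destruct f as [i phi]; destruct phi; simpl; split; auto; intros x Hx; simpl; auto.
Qed.

Lemma addL_cons f Gn Dn : ~ G'prov (f :: Gn) Dn -> ~ G'prov (addL f Gn Dn) Dn.
Proof.
  destruct f as [i phi]; destruct phi; simpl; auto.
  intros H1 H2; apply H1.
  apply (P_set (G := (i, FDia s phi) :: (i, FDia s phi) :: Gn) (D := Dn)); [ss|ss|].
  eapply P_diaL; [|exact H2].
  intros [g [[[Hg|Hg]|Hg] Ho]]; apply (fresh_spec ((i, FDia s phi) :: Gn) Dn); exists g; simpl; auto.
Qed.

Fixpoint chain (n : nat) : list (lform Mod) * list (lform Mod) :=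
  match n with
  | 0 => (G0, D0)
  | S n =>
      let p := chain n in
      if classic_dec (G'prov (fst p) (enumf n :: snd p))
      then (addL (enumf n) (fst p) (snd p), snd p)
      else (fst p, enumf n :: snd p)
  end.

Lemma chain_inv n : ~ G'prov (fst (chain n)) (snd (chain n)).
Proof.
  induction n as [|n IH]; simpl; auto.
  destruct (classic_dec _) as [h|h]; simpl; auto.
  apply addL_cons. intros H2. apply IH.
  apply (P_set (G:=fst (chain n) ++ fst (chain n)) (D:=snd (chain n) ++ snd (chain n))); [ss|ss|].
  exact (P_cut h H2).
Qed.

Lemma chain_mono1 n : incl (fst (chain n)) (fst (chain (S n))) /\ incl (snd (chain n)) (snd (chain (S n))).
Proof.
  simpl. destruct (classic_dec _) as [h|h]; simpl; split; try (intros x Hx; simpl; auto; fail).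
  apply (proj2 (addL_in _ _ _)).
Qed.

Lemma chain_mono n m : n <= m -> incl (fst (chain n)) (fst (chain m)) /\ incl (snd (chain n)) (snd (chain m)).
Proof.
  induction 1 as [|m Hm [IH1 IH2]].
  - split; intros x Hx; auto.
  - destruct (chain_mono1 m) as [A B]. split; intros x Hx; auto.
Qed.

Definition TG f := exists n, In f (fst (chain n)).
Definition TD f := exists n, In f (snd (chain n)).

Lemma consistent Gs Ds : (forall g, In g Gs -> TG g) -> (forall d, In d Ds -> TD d) -> ~ G'prov Gs Ds.
Proof.
  intros HG HD Hp.
  destruct (fin_bound (fun n => fst (chain n)) (fun n m h => proj1 (chain_mono _ _ h)) Gs HG) as [N1 H1].
  destruct (fin_bound (fun n => snd (chain n)) (fun n m h => proj2 (chain_mono _ _ h)) Ds HD) as [N2 H2].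
  apply (chain_inv (max N1 N2)).
  apply (weaken Hp).
  - intros x Hx. apply (proj1 (chain_mono _ _ (Nat.le_max_l N1 N2))); auto.
  - intros x Hx. apply (proj2 (chain_mono _ _ (Nat.le_max_r N1 N2))); auto.
Qed.

Arguments consistent {Gs Ds}.

Lemma maximal f : TG f \/ TD f.
Proof.
  destruct (enumf_surj f) as [n Hn].
  assert (H : In f (fst (chain (S n))) \/ In f (snd (chain (S n)))).
  { simpl. destruct (classic_dec _) as [h|h]; simpl; rewrite Hn.
    - left; apply (proj1 (addL_in _ _ _)).
    - right; left; reflexivity. }
  destruct H; [left|right]; exists (S n); auto.
Qed.

Lemma notboth f : TG f -> TD f -> False.
Proof.
  intros H1 H2. apply (consistent (Gs := f :: nil) (Ds := f :: nil)).
  - intros g [<-|[]]; auto.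
  - intros g [<-|[]]; auto.
  - apply ident1.
Qed.

Arguments notboth {f}.

Lemma closure Gs Ds : (forall g, In g Gs -> TG g) -> G'prov Gs Ds -> exists d, In d Ds /\ TG d.
Proof.
  intros HG Hp. apply NNPP. intros Hn.
  apply (consistent HG (Ds := Ds)); auto.
  intros d Hd. destruct (maximal d) as [h|h]; auto. exfalso; apply Hn; exists d; auto.
Qed.

Arguments closure {Gs Ds}.

Lemma witness i a phi : TG (i, FDia a phi) -> exists j, TG (i, FDia a (FNom j)) /\ TG (j, phi).
Proof.
  intros HT. destruct (enumf_surj (i, FDia a phi)) as [n Hn].
  destruct (classic_dec (G'prov (fst (chain n)) (enumf n :: snd (chain n)))) as [h|h].
  - exists (fresh ((i, FDia a phi) :: fst (chain n)) (snd (chain n))).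
    split; exists (S n); simpl; destruct (classic_dec _) as [h'|h']; try contradiction;
      simpl; rewrite Hn; simpl; auto.
  - exfalso. apply (notboth HT). exists (S n). simpl.
    destruct (classic_dec _) as [h'|h']; try contradiction. simpl. left; auto.
Qed.

Lemma cl1 g f : TG g -> G'prov (g :: nil) (f :: nil) -> TG f.
Proof.
  intros H Hp. destruct (closure (Gs := g :: nil) (Ds := f :: nil)) as [d [[<-|[]] Hd]]; auto.
  intros x [<-|[]]; auto.
Qed.

Arguments cl1 {g f}.

Lemma cl2 g1 g2 f : TG g1 -> TG g2 -> G'prov (g1 :: g2 :: nil) (f :: nil) -> TG f.
Proof.
  intros H1 H2 Hp. destruct (closure (Gs := g1 :: g2 :: nil) (Ds := f :: nil)) as [d [[<-|[]] Hd]]; auto.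
  intros x [<-|[<-|[]]]; auto.
Qed.

Arguments cl2 {g1 g2 f}.
Arguments witness {i a phi}.

Lemma E_refl i : TG (i, FNom i).
Proof.
  destruct (closure (Gs := nil) (Ds := (i, FNom i) :: nil)) as [d [[<-|[]] Hd]]; auto.
  - intros x [].
  - apply (P_atT (i := i)). apply P_ax_nom.
Qed.

Lemma E_sym i j : TG (i, FNom j) -> TG (j, FNom i).
Proof.
  intros H. apply (cl1 H). apply (P_atT (i := i)).
  apply (P_set (G := (i, FNom j) :: (i, FNom i) :: nil) (D := (j, FNom i) :: nil)); [ss|ss|].
  apply P_at5. apply P_ax_nom.
Qed.

Arguments E_sym {i j}.

Lemma E_trans i j k : TG (i, FNom j) -> TG (j, FNom k) -> TG (i, FNom k).
Proof.
  intros H1 H2. apply (cl2 (E_sym H1) H2). apply P_at5. apply P_ax_nom.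
Qed.

Arguments E_trans {i j k}.

Definition gn (i : nom) : nom -> Prop := fun k => TG (i, FNom k).

Lemma gn_eq i j : gn i = gn j <-> TG (i, FNom j).
Proof.
  split.
  - intros H. apply E_sym. change (gn j i). rewrite <- H. apply E_refl.
  - intros H. apply functional_extensionality. intros k. apply propositional_extensionality.
    unfold gn. split; intros H2.
    + apply (E_trans (E_sym H) H2).
    + apply (E_trans H H2).
Qed.

Definition CM : model Mod :=
  @Model Mod (nom -> Prop)
    (fun a X Y => exists i j, X = gn i /\ Y = gn j /\ TG (i, FDia a (FNom j)))
    gn
    (fun p X => exists i, X = gn i /\ TG (i, FProp p)).

Lemma truth (phi : form Mod) : forall i, sat CM (gn i) phi <-> TG (i, phi).
Proof.
  induction phi as [p|k| |a IHa b IHb|k a IHa|m a IHa]; intros i; simpl.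
  - split.
    + intros [k [Hk Hp]]. apply gn_eq in Hk.
      apply (cl2 (E_sym Hk) Hp). apply P_S1; [left; exists p; auto|]. apply P_ax_prop.
    + intros H; exists i; auto.
  - rewrite gn_eq. split; apply E_sym.
  - split; [tauto|]. intros H.
    destruct (closure (Gs := (i, FBot) :: nil) (Ds := nil)) as [d [[] _]].
    + intros x [<-|[]]; auto.
    + apply P_bot.
  - rewrite IHa IHb. split.
    + intros H. destruct (maximal (i, a)) as [h|h].
      * apply (cl1 (H h)). apply P_impR. apply P_WL. apply ident1.
      * destruct (closure (Gs := nil) (Ds := (i, a) :: (i, FImp a b) :: nil)) as [d [[<-|[<-|[]]] Hd]].
        -- intros x [].
        -- apply (P_set (G := nil) (D := (i, FImp a b) :: (i, a) :: nil)); [ss|ss|].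
           apply P_impR.
           apply (P_set (G := (i, a) :: nil) (D := (i, a) :: (i, b) :: nil)); [ss|ss|apply ident].
        -- exfalso; apply (notboth Hd h).
        -- exact Hd.
    + intros H Ha. apply (cl2 H Ha). apply P_impL.
      * apply (P_set (G := (i, a) :: nil) (D := (i, a) :: (i, b) :: nil)); [ss|ss|]. apply ident.
      * apply ident.
  - rewrite IHa. split; intros H.
    + apply (cl1 H). apply P_atR. apply ident.
    + apply (cl1 H). apply P_atL. apply ident.
  - split.
    + intros [Y [[i' [j [Hi [Hj Hd]]]] Hs]]. subst Y.
      apply IHa in Hs. apply gn_eq in Hi.
      assert (H1 : TG (i, FDia m (FNom j))).
      { apply (cl2 (E_sym Hi) Hd). apply P_S1; [right; right; exists m, j; auto|]. apply ident. }
      apply (cl2 H1 Hs). apply P_diaR.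
      apply (P_set (G := (j, a) :: (i, FDia m (FNom j)) :: nil) (D := (j, a) :: (i, FDia m a) :: nil)); [ss|ss|].
      apply ident.
    + intros H. destruct (witness H) as [j [H1 H2]].
      exists (gn j). split.
      * exists i, j; auto.
      * apply IHa; auto.
Qed.

Lemma completeness_aux : ~ valid G0 D0.
Proof.
  intros Hv. destruct (Hv CM (gn 0)) as [d [Hd Hs]].
  - intros [i phi] Hg. unfold sat_l; simpl. apply truth. exists 0; auto.
  - destruct d as [i phi]. unfold sat_l in Hs; simpl in Hs. apply truth in Hs.
    apply (notboth Hs). exists 0; auto.
Qed.

End Chain.

Theorem theorem5 (Mod : finType) (G D : list (lform Mod)) :
  valid G D <-> G'prov G D.
Proof.
  split.
  - intros Hv. apply NNPP. intros Hn. exact (@completeness_aux Mod G D Hn Hv).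
  - apply soundness.
Qed.
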